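(* Let $\delta\in\{0,1\}$ and let $b,\ell,u$ be nonnegative integers. There exists a set $\mathfrak{B}$ of integer $2\times3$ matrices which is the disjoint union of two subsets $\mathfrak{B}'$ and $\mathfrak{B}''$ with $|\mathfrak{B}'|=2\ell$ and $|\mathfrak{B}''|=2u$, such that $\sigma_r(M)=(0,0)$ and $\sigma_c(M)=(-2,1,1)$ for all $M\in\mathfrak{B}'$, $\sigma_r(M)=(0,0)$ and $\sigma_c(M)=(-4,2,2)$ for all $M\in\mathfrak{B}''$, and the multiset of absolute values of all entries of all matrices in $\mathfrak{B}$ is exactly the set $$[2b+1,2b+8u+8\ell-1]_2\cup[2b+8u+8\ell+\delta,2b+12u+12\ell+\delta-1]\cup[4b+12u+12\ell+\delta,4b+16u+16\ell+\delta-1]$$ (each element occurring once).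
   Context: For integers $a\equiv b\pmod d$ with $d\geqslant1$, $[a,b]_d=\{a+id: 0\leqslant i\leqslant (b-a)/d\}$ if $a\leqslant b$ and $[a,b]_d=\varnothing$ if $a>b$; $[a,b]=[a,b]_1$. For a matrix $M$, $\sigma_r(M)$ is the sequence of its row sums and $\sigma_c(M)$ the sequence of its column sums. *)

(* Defs.v *)
From mathcomp Require Import all_boot all_order all_algebra.
Set Implicit Arguments. Unset Strict Implicit. Unset Printing Implicit Defensive.
Import Order.TTheory GRing.Theory Num.Theory.
Local Open Scope ring_scope.

Definition ivl_step (a b : int) (d : nat) : seq int :=
  if a <= b then [seq a + (i%:Z * d%:Z) | i <- iota 0 (`|b - a|%N %/ d).+1]
  else [::].

Definition ivl (a b : int) : seq int := ivl_step a b 1.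

Definition sigma_r (m n : nat) (M : 'M[int]_(m, n)) : seq int :=
  [seq \sum_(j < n) M i j | i <- enum 'I_m].
Definition sigma_c (m n : nat) (M : 'M[int]_(m, n)) : seq int :=
  [seq \sum_(i < m) M i j | j <- enum 'I_n].

Definition abs_entries (m n : nat) (M : 'M[int]_(m, n)) : seq int :=
  [seq `|M i j| | i <- enum 'I_m, j <- enum 'I_n].

(* Main.v *)
Require Import Defs.
From mathcomp Require Import all_boot all_order all_algebra.
From mathcomp Require Import zify.
Import Order.TTheory GRing.Theory Num.Theory.
Local Open Scope ring_scope.

Definition mx6 (x : nat -> int) : 'M[int]_(2, 3) :=
  \matrix_(i < 2, j < 3) x (3 * i + j)%N.

Lemma sigma_r_mx6 x : sigma_r (mx6 x) = [:: x 0%N + x 1%N + x 2%N; x 3%N + x 4%N + x 5%N].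
Proof.
rewrite /sigma_r enum_ordSl enum_ordSl enum_ord0 /=.
rewrite !big_ord_recr !big_ord0 /= !mxE /= !add0r. done.
Qed.

Lemma sigma_c_mx6 x : sigma_c (mx6 x) = [:: x 0%N + x 3%N; x 1%N + x 4%N; x 2%N + x 5%N].
Proof.
rewrite /sigma_c enum_ordSl enum_ordSl enum_ordSl enum_ord0 /=.
rewrite !big_ord_recr !big_ord0 /= !mxE /= !add0r. done.
Qed.

Lemma abs_mx6 x : abs_entries (mx6 x) =
  [:: `|x 0%N|; `|x 1%N|; `|x 2%N|; `|x 3%N|; `|x 4%N|; `|x 5%N|].
Proof.
rewrite /abs_entries !enum_ordSl !enum_ord0 /=.
rewrite !mxE. done.
Qed.

Section NatLemmas.
Local Open Scope nat_scope.

Lemma flatten_blocks (F : nat -> nat) n :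
  flatten [seq [seq F (4 * j + t) | t <- iota 0 4] | j <- iota 0 n]
  = [seq F i | i <- iota 0 (4 * n)].
Proof.
elim: n => [|n IH] //.
rewrite -[n.+1]addn1 iotaD map_cat flatten_cat IH /=.
by rewrite !add0n addn0 mulnDr muln1 iotaD map_cat /= add0n !addnS addn0.
Qed.

Lemma perm_flatten_map (T U : eqType) (f : T -> seq U) s t :
  perm_eq s t -> perm_eq (flatten (map f s)) (flatten (map f t)).
Proof.
move=> pst; apply/permP => a.
rewrite !count_flatten -!map_comp.
by apply: perm_sumn; apply: perm_map.
Qed.

Lemma perm_flatten_cat3 (T U : eqType) (f g h : T -> seq U) s :
  perm_eq (flatten [seq f j ++ g j ++ h j | j <- s])
          (flatten (map f s) ++ flatten (map g s) ++ flatten (map h s)).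
Proof.
elim: s => [|x s IH] //=.
apply/permP => a; rewrite !count_cat (permP IH) !count_cat; lia.
Qed.

Lemma uniq_flatten_map (T U : eqType) (f : T -> seq U) s :
  (forall x, f x != [::]) -> uniq (flatten (map f s)) -> uniq s.
Proof.
move=> ne; elim: s => [|x s IH] //=.
rewrite cat_uniq => /and3P [_ hn hu].
rewrite IH // andbT.
apply/negP => xs; move/negP: hn; apply.
case E: (f x) (ne x) => [|y ys] // _.
apply/hasP; exists y; last by rewrite mem_head.
apply/flattenP; exists (f x); first by apply/mapP; exists x.
by rewrite E mem_head.
Qed.

End NatLemmas.

Lemma ivl_stepE (a d k : nat) : (0 < d)%N ->
  ivl_step a%:Z (a%:Z + (k * d)%N%:Z - d%:Z) d
  = map Posz [seq (a + i * d)%N | i <- iota 0 k].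
Proof.
move=> d0; rewrite /ivl_step; case: k => [|k].
  by case: ifP => [h|_] //; exfalso; lia.
case: ifP => [_|h]; last by exfalso; lia.
have -> : a%:Z + (k.+1 * d)%N%:Z - d%:Z - a%:Z = (k * d)%N%:Z by lia.
rewrite /= mulnK // -map_comp.
by congr (_ :: _).
Qed.

Lemma perm_flatten_pw (T U : eqType) (f f' : T -> seq U) s :
  (forall j, j \in s -> perm_eq (f j) (f' j)) ->
  perm_eq (flatten (map f s)) (flatten (map f' s)).
Proof.
move=> H; apply/permP => a; rewrite !count_flatten -!map_comp.
congr sumn; apply/eq_in_map => j js /=; exact: (permP (H j js)).
Qed.

Lemma size_flatten2 (T U : Type) (f g : T -> U) s :
  size (flatten [seq [:: f j; g j] | j <- s]) = (2 * size s)%N.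
Proof. elim: s => [|x s IH] //=; rewrite IH; lia. Qed.

Lemma perm_iota_rev n :
  perm_eq (iota 0 n) [seq (n.-1 - j)%N | j <- iota 0 n].
Proof.
apply: uniq_perm; first exact: iota_uniq.
  rewrite map_inj_in_uniq ?iota_uniq // => x y; rewrite !mem_iota /=; lia.
move=> x; apply/idP/mapP.
  rewrite mem_iota /= => hx; exists (n.-1 - x)%N; rewrite ?mem_iota /=; lia.
by move=> [y]; rewrite !mem_iota /= => hy ->; lia.
Qed.

Lemma Posz_inj : injective Posz.
Proof. by move=> x y []. Qed.

Lemma eq2 (x y x' y' : int) : x = x' -> y = y' -> [:: x; y] = [:: x'; y'].
Proof. by move=> -> ->. Qed.
Lemma eq3 (x y z x' y' z' : int) : x = x' -> y = y' -> z = z' ->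
  [:: x; y; z] = [:: x'; y'; z'].
Proof. by move=> -> -> ->. Qed.

Section Constr.
Variables (delta b l u : nat).
Local Notation n := (l + u)%N.

Definition A0 j := (2 * b + 1 + 8 * j)%N.
Definition C0 j := (2 * b + 8 * n + delta + 4 * (n - 1 - j))%N.
Definition D0 j := (4 * b + 12 * n + delta + 4 * j)%N.
Definition g j i :=
  if (i < 4)%N then (A0 j + 2 * i)%N
  else if (i < 8)%N then (C0 j + (i - 4))%N else (D0 j + (i - 8))%N.

Definition mkM (h : nat -> nat) (p : seq nat) : 'M[int]_(2, 3) :=
  mx6 (fun k => if k \in [:: 2; 3; 4]%N then - (h (nth 0%N p k))%:Z
                else (h (nth 0%N p k))%:Z).

Definition P1 j : seq nat := if (j < l)%N then [:: 0; 7; 8; 1; 6; 9]%N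
                             else [:: 0; 7; 8; 2; 5; 10]%N.
Definition P2 j : seq nat := if (j < l)%N then [:: 2; 5; 10; 3; 4; 11]%N
                             else [:: 1; 6; 9; 3; 4; 11]%N.

Definition Mat1 j := mkM (g j) (P1 j).
Definition Mat2 j := mkM (g j) (P2 j).

Lemma abs_mkM h p : abs_entries (mkM h p) =
  [seq (h (nth 0%N p k))%:Z | k <- iota 0 6].
Proof. by rewrite /mkM abs_mx6 /= !normrN. Qed.

Lemma abs_block j : abs_entries (Mat1 j) ++ abs_entries (Mat2 j)
  = map Posz (map (g j) (P1 j ++ P2 j)).
Proof. by rewrite /Mat1 /Mat2 !abs_mkM /P1 /P2; case: ifP. Qed.

Lemma perm_block j : perm_eq (P1 j ++ P2 j) (iota 0 12).
Proof. by rewrite /P1 /P2; case: ifP. Qed.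

Definition blA j := [seq (A0 j + 2 * t)%N | t <- iota 0 4].
Definition blC j := [seq (C0 j + t)%N | t <- iota 0 4].
Definition blD j := [seq (D0 j + t)%N | t <- iota 0 4].

Lemma g_iota j : map (g j) (iota 0 12) = blA j ++ blC j ++ blD j.
Proof. by []. Qed.


Lemma sig_Mat1 j : (j < n)%N -> sigma_r (Mat1 j) = [:: 0; 0] /\
  sigma_c (Mat1 j) = if (j < l)%N then [:: -2; 1; 1] else [:: -4; 2; 2].
Proof.
move=> jn; rewrite /Mat1 /mkM sigma_r_mx6 sigma_c_mx6 /P1.
case: ifP => hj /=; rewrite /g /A0 /C0 /D0 /=; split; (apply: eq2 || apply: eq3); lia.
Qed.

Lemma sig_Mat2 j : (j < n)%N -> sigma_r (Mat2 j) = [:: 0; 0] /\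
  sigma_c (Mat2 j) = if (j < l)%N then [:: -2; 1; 1] else [:: -4; 2; 2].
Proof.
move=> jn; rewrite /Mat2 /mkM sigma_r_mx6 sigma_c_mx6 /P2.
case: ifP => hj /=; rewrite /g /A0 /C0 /D0 /=; split; (apply: eq2 || apply: eq3); lia.
Qed.

Definition TA := [seq (2 * b + 1 + i * 2)%N | i <- iota 0 (4 * n)].
Definition TC := [seq (2 * b + 8 * n + delta + i * 1)%N | i <- iota 0 (4 * n)].
Definition TD := [seq (4 * b + 12 * n + delta + i * 1)%N | i <- iota 0 (4 * n)].

Lemma main_perm : perm_eq (flatten [seq map (g j) (P1 j ++ P2 j) | j <- iota 0 n])
  (TA ++ TC ++ TD).
Proof.
apply: perm_trans.
  apply: (@perm_flatten_pw _ _ _ (fun j => blA j ++ blC j ++ blD j)) => j _.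
  by rewrite -g_iota; apply: perm_map; apply: perm_block.
apply: perm_trans; first exact: perm_flatten_cat3.
have -> : flatten (map blA (iota 0 n)) = TA.
  rewrite /TA -(flatten_blocks (fun i => 2 * b + 1 + i * 2)%N).
  congr flatten; apply: eq_map => j; apply: eq_map => t; rewrite /A0; lia.
have -> : flatten (map blD (iota 0 n)) = TD.
  rewrite /TD -(flatten_blocks (fun i => 4 * b + 12 * n + delta + i * 1)%N).
  congr flatten; apply: eq_map => j; apply: eq_map => t; rewrite /D0; lia.
rewrite perm_cat2l perm_cat2r.
apply: perm_trans; first exact: (@perm_flatten_map _ _ blC _ _ (perm_iota_rev n)).
rewrite -map_comp /TC -(flatten_blocks (fun i => 2 * b + 8 * n + delta + i * 1)%N).
rewrite (_ : [seq (blC \o (fun j => n.-1 - j)%N) i | i <- iota 0 n] =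
   [seq [seq (2 * b + 8 * n + delta + (4 * j + t) * 1)%N | t <- iota 0 4] | j <- iota 0 n]) //.
apply/eq_in_map => j; rewrite mem_iota /= => hj.
rewrite /blC /=.
have e : C0 (n.-1 - j) = (2 * b + 8 * n + delta + 4 * j)%N by rewrite /C0; lia.
rewrite e; congr [:: _; _; _; _]; lia.
Qed.

Lemma uniq_T : uniq (TA ++ TC ++ TD).
Proof.
have inj c d : (0 < d)%N -> injective (fun i => (c + i * d)%N).
  by move=> d0 x y /=; nia.
rewrite !cat_uniq /TA /TC /TD !map_inj_uniq ?iota_uniq ?inj //=.
apply/and3P; split.
- apply/hasPn => x; rewrite mem_cat => /orP [] /mapP [i]; rewrite mem_iota => hi ->;
  apply/negP => /mapP [k]; rewrite mem_iota => hk; lia.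
- apply/hasPn => x /mapP [i]; rewrite mem_iota => hi ->;
  apply/negP => /mapP [k]; rewrite mem_iota => hk; lia.
- done.
all: exact: inj.
Qed.

End Constr.

Lemma abs_flatten (F G : nat -> 'M[int]_(2, 3)) s :
  flatten [seq abs_entries M | M <- flatten [seq [:: F j; G j] | j <- s]]
  = flatten [seq abs_entries (F j) ++ abs_entries (G j) | j <- s].
Proof. by elim: s => [|x s IH] //=; rewrite IH catA. Qed.

Lemma flatten_Posz (F : nat -> seq nat) s :
  flatten [seq map Posz (F j) | j <- s] = map Posz (flatten (map F s)).
Proof. by elim: s => [|x s IH] //=; rewrite IH map_cat. Qed.

Theorem lemma2p4 (delta b l u : nat) (hdelta : (delta <= 1)%N) :
  exists (B1 B2 : seq 'M[int]_(2, 3)),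
    [/\ uniq (B1 ++ B2) /\ size B1 = (2 * l)%N,
        size B2 = (2 * u)%N,
        (forall M, M \in B1 -> sigma_r M = [:: 0; 0] /\ sigma_c M = [:: -2; 1; 1]),
        (forall M, M \in B2 -> sigma_r M = [:: 0; 0] /\ sigma_c M = [:: -4; 2; 2]) &
        perm_eq (flatten [seq abs_entries M | M <- B1 ++ B2])
          (ivl_step (2 * b%:Z + 1) (2 * b%:Z + 8 * u%:Z + 8 * l%:Z - 1) 2
           ++ ivl (2 * b%:Z + 8 * u%:Z + 8 * l%:Z + delta%:Z)
                  (2 * b%:Z + 12 * u%:Z + 12 * l%:Z + delta%:Z - 1)
           ++ ivl (4 * b%:Z + 12 * u%:Z + 12 * l%:Z + delta%:Z)
                  (4 * b%:Z + 16 * u%:Z + 16 * l%:Z + delta%:Z - 1))].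
Proof.
pose F j := [:: Mat1 delta b l u j; Mat2 delta b l u j].
exists (flatten (map F (iota 0 l))), (flatten (map F (iota l u))).
have HB : flatten (map F (iota 0 l)) ++ flatten (map F (iota l u))
          = flatten (map F (iota 0 (l + u))).
  by rewrite iotaD map_cat flatten_cat.
have eA : ivl_step (2 * b%:Z + 1) (2 * b%:Z + 8 * u%:Z + 8 * l%:Z - 1) 2
          = map Posz (TA b l u).
  rewrite (_ : 2 * b%:Z + 8 * u%:Z + 8 * l%:Z - 1
     = (2 * b + 1)%N%:Z + ((4 * (l + u)) * 2)%N%:Z - 2%N%:Z); last by lia.
  rewrite (_ : 2 * b%:Z + 1 = (2 * b + 1)%N%:Z); last by lia.
  exact: ivl_stepE.
have eC : ivl (2 * b%:Z + 8 * u%:Z + 8 * l%:Z + delta%:Z)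
              (2 * b%:Z + 12 * u%:Z + 12 * l%:Z + delta%:Z - 1)
          = map Posz (TC delta b l u).
  rewrite /ivl (_ : 2 * b%:Z + 12 * u%:Z + 12 * l%:Z + delta%:Z - 1
     = (2 * b + 8 * (l + u) + delta)%N%:Z + ((4 * (l + u)) * 1)%N%:Z - 1%N%:Z); last by lia.
  rewrite (_ : 2 * b%:Z + 8 * u%:Z + 8 * l%:Z + delta%:Z
     = (2 * b + 8 * (l + u) + delta)%N%:Z); last by lia.
  exact: ivl_stepE.
have eD : ivl (4 * b%:Z + 12 * u%:Z + 12 * l%:Z + delta%:Z)
              (4 * b%:Z + 16 * u%:Z + 16 * l%:Z + delta%:Z - 1)
          = map Posz (TD delta b l u).
  rewrite /ivl (_ : 4 * b%:Z + 16 * u%:Z + 16 * l%:Z + delta%:Z - 1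
     = (4 * b + 12 * (l + u) + delta)%N%:Z + ((4 * (l + u)) * 1)%N%:Z - 1%N%:Z); last by lia.
  rewrite (_ : 4 * b%:Z + 12 * u%:Z + 12 * l%:Z + delta%:Z
     = (4 * b + 12 * (l + u) + delta)%N%:Z); last by lia.
  exact: ivl_stepE.
have Hperm : perm_eq (flatten [seq abs_entries M | M <- flatten (map F (iota 0 l))
                                                      ++ flatten (map F (iota l u))])
   (map Posz (TA b l u ++ TC delta b l u ++ TD delta b l u)).
  rewrite HB abs_flatten.
  rewrite (eq_map (abs_block delta b l u)) flatten_Posz.
  by apply: perm_map; apply: main_perm.
split.
- split; last by rewrite size_flatten2 size_iota.
  apply: (@uniq_flatten_map _ _ (@abs_entries 2 3)).
    by move=> M; rewrite /abs_entries !enum_ordSl.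
  rewrite (perm_uniq Hperm) map_inj_uniq; [exact: uniq_T | exact: Posz_inj].
- by rewrite size_flatten2 size_iota.
- move=> M /flatten_mapP [j]; rewrite mem_iota /= => hj.
  rewrite !inE => /orP [] /eqP ->.
    by case: (@sig_Mat1 delta b l u j) => //; [lia | rewrite hj => -> ->].
  by case: (@sig_Mat2 delta b l u j) => //; [lia | rewrite hj => -> ->].
- move=> M /flatten_mapP [j]; rewrite mem_iota /= => hj.
  have hjl : (j < l)%N = false by lia.
  rewrite !inE => /orP [] /eqP ->.
    by case: (@sig_Mat1 delta b l u j) => //; [lia | rewrite hjl => -> ->].
  by case: (@sig_Mat2 delta b l u j) => //; [lia | rewrite hjl => -> ->].
- by rewrite eA eC eD -!map_cat.
Qed.
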